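(* Let $\mathscr{B}$ be a cotensored $\mathscr{V}$-category with $\mathscr{V}$-cokernel-pairs, $\mathscr{V}$-pullbacks of $\mathscr{V}$-monos along arbitrary morphisms, and arbitrary $\mathscr{V}$-intersections of $\mathscr{V}$-monos. Then $(\mathsf{StrEpi}_\mathscr{V}\mathscr{B},\mathsf{Mono}_\mathscr{V}\mathscr{B})$ is a $\mathscr{V}$-factorization-system on $\mathscr{B}$.
   Context: $\mathscr{V}$ is a closed symmetric monoidal category (no limits assumed). In a $\mathscr{V}$-category $\mathscr{B}$: $\mathscr{V}$-limits are cones sent by all $\mathscr{B}(A,-):\mathscr{B}\to\mathscr{V}$ to limit cones; $\mathscr{V}$-cokernel-pairs are $\mathscr{V}$-kernel-pairs in $\mathscr{B}^{op}$. $\mathsf{Mono}_\mathscr{V}\mathscr{B}$: morphisms $m$ with $\mathscr{B}(A,m)$ mono in $\mathscr{V}$ for all $A$; $\mathscr{V}$-epis: $e$ with $\mathscr{B}(e,C)$ mono for all $C$. A $\mathscr{V}$-intersection of a class-indexed family of $\mathscr{V}$-monos with common codomain is its $\mathscr{V}$-fibre-product (wide $\mathscr{V}$-pullback). For $e:A_1\to A_2$, $m:B_1\to B_2$, $e\downarrow_\mathscr{V} m$ means the square formed by $\mathscr{B}(A_2,m)$, $\mathscr{B}(A_1,m)$, $\mathscr{B}(e,B_1)$, $\mathscr{B}(e,B_2)$ is a pullback in $\mathscr{V}$. $\mathsf{StrEpi}_\mathscr{V}\mathscr{B}$ is the class of $\mathscr{V}$-epis $e$ with $e\downarrow_\mathscr{V}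 m$ for every $\mathscr{V}$-mono $m$. A $\mathscr{V}$-factorization-system is a pair $(\mathscr{E},\mathscr{M})$ such that $\mathscr{M}$ is exactly the class of $m$ with $e\downarrow_\mathscr{V} m$ for all $e\in\mathscr{E}$, $\mathscr{E}$ exactly the class of $e$ with $e\downarrow_\mathscr{V} m$ for all $m\in\mathscr{M}$, and every morphism is assigned a factorization $m\cdot e$ with $e\in\mathscr{E}$, $m\in\mathscr{M}$. *)

(* Defs.v *)
Record SMCC := {
  Vob : Type;
  Vhom : Vob -> Vob -> Type;
  Vcomp : forall X Y Z, Vhom Y Z -> Vhom X Y -> Vhom X Z;
  Vid : forall X, Vhom X X;
  Vcomp_assoc : forall X Y Z W (h : Vhom Z W) (g : Vhom Y Z) (f : Vhom X Y),
      Vcomp _ _ _ h (Vcomp _ _ _ g f) = Vcomp _ _ _ (Vcomp _ _ _ h g) f;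
  Vid_l : forall X Y (f : Vhom X Y), Vcomp _ _ _ (Vid Y) f = f;
  Vid_r : forall X Y (f : Vhom X Y), Vcomp _ _ _ f (Vid X) = f;
  Vten : Vob -> Vob -> Vob;
  Vtenm : forall X X' Y Y', Vhom X X' -> Vhom Y Y' -> Vhom (Vten X Y) (Vten X' Y');
  Vtenm_id : forall X Y, Vtenm _ _ _ _ (Vid X) (Vid Y) = Vid (Vten X Y);
  Vtenm_comp : forall X X' X'' Y Y' Y'' (f : Vhom X X') (f' : Vhom X' X'')
      (g : Vhom Y Y') (g' : Vhom Y' Y''),
      Vtenm _ _ _ _ (Vcomp _ _ _ f' f) (Vcomp _ _ _ g' g)
      = Vcomp _ _ _ (Vtenm _ _ _ _ f' g') (Vtenm _ _ _ _ f g);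
  VI : Vob;
  Va : forall X Y Z, Vhom (Vten (Vten X Y) Z) (Vten X (Vten Y Z));
  Va_inv : forall X Y Z, Vhom (Vten X (Vten Y Z)) (Vten (Vten X Y) Z);
  Va_iso1 : forall X Y Z, Vcomp _ _ _ (Va_inv X Y Z) (Va X Y Z) = Vid _;
  Va_iso2 : forall X Y Z, Vcomp _ _ _ (Va X Y Z) (Va_inv X Y Z) = Vid _;
  Va_nat : forall X X' Y Y' Z Z' (f : Vhom X X') (g : Vhom Y Y') (h : Vhom Z Z'),
      Vcomp _ _ _ (Va X' Y' Z') (Vtenm _ _ _ _ (Vtenm _ _ _ _ f g) h)
      = Vcomp _ _ _ (Vtenm _ _ _ _ f (Vtenm _ _ _ _ g h)) (Va X Y Z);
  Vl : forall X, Vhom (Vten VI X) X;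
  Vl_inv : forall X, Vhom X (Vten VI X);
  Vl_iso1 : forall X, Vcomp _ _ _ (Vl_inv X) (Vl X) = Vid _;
  Vl_iso2 : forall X, Vcomp _ _ _ (Vl X) (Vl_inv X) = Vid _;
  Vl_nat : forall X Y (f : Vhom X Y),
      Vcomp _ _ _ f (Vl X) = Vcomp _ _ _ (Vl Y) (Vtenm _ _ _ _ (Vid VI) f);
  Vr : forall X, Vhom (Vten X VI) X;
  Vr_inv : forall X, Vhom X (Vten X VI);
  Vr_iso1 : forall X, Vcomp _ _ _ (Vr_inv X) (Vr X) = Vid _;
  Vr_iso2 : forall X, Vcomp _ _ _ (Vr X) (Vr_inv X) = Vid _;
  Vr_nat : forall X Y (f : Vhom X Y),
      Vcomp _ _ _ f (Vr X) = Vcomp _ _ _ (Vr Y) (Vtenm _ _ _ _ f (Vid VI));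
  Vpentagon : forall W X Y Z,
      Vcomp _ _ _ (Va W X (Vten Y Z)) (Va (Vten W X) Y Z)
      = Vcomp _ _ _ (Vtenm _ _ _ _ (Vid W) (Va X Y Z))
          (Vcomp _ _ _ (Va W (Vten X Y) Z) (Vtenm _ _ _ _ (Va W X Y) (Vid Z)));
  Vtriangle : forall X Y,
      Vcomp _ _ _ (Vtenm _ _ _ _ (Vid X) (Vl Y)) (Va X VI Y)
      = Vtenm _ _ _ _ (Vr X) (Vid Y);
  Vs : forall X Y, Vhom (Vten X Y) (Vten Y X);
  Vs_nat : forall X X' Y Y' (f : Vhom X X') (g : Vhom Y Y'),
      Vcomp _ _ _ (Vs X' Y') (Vtenm _ _ _ _ f g)
      = Vcomp _ _ _ (Vtenm _ _ _ _ g f) (Vs X Y);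
  Vs_invol : forall X Y, Vcomp _ _ _ (Vs Y X) (Vs X Y) = Vid _;
  Vhexagon : forall X Y Z,
      Vcomp _ _ _ (Va Y Z X) (Vcomp _ _ _ (Vs X (Vten Y Z)) (Va X Y Z))
      = Vcomp _ _ _ (Vtenm _ _ _ _ (Vid Y) (Vs X Z))
          (Vcomp _ _ _ (Va Y X Z) (Vtenm _ _ _ _ (Vs X Y) (Vid Z)));
  Vihom : Vob -> Vob -> Vob;
  Vev : forall X Y, Vhom (Vten (Vihom X Y) X) Y;
  Vcurry : forall Z X Y, Vhom (Vten Z X) Y -> Vhom Z (Vihom X Y);
  Vcurry_ev : forall Z X Y (f : Vhom (Vten Z X) Y),
      Vcomp _ _ _ (Vev X Y) (Vtenm _ _ _ _ (Vcurry _ _ _ f) (Vid X)) = f;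
  Vcurry_uniq : forall Z X Y (f : Vhom (Vten Z X) Y) (g : Vhom Z (Vihom X Y)),
      Vcomp _ _ _ (Vev X Y) (Vtenm _ _ _ _ g (Vid X)) = f -> g = Vcurry _ _ _ f
}.

Arguments Vhom {_} _ _.
Arguments Vcomp {_ _ _ _} _ _.
Arguments Vid {_} _.
Arguments Vten {_} _ _.
Arguments Vtenm {_ _ _ _ _} _ _.
Arguments VI {_}.
Arguments Va {_} _ _ _.
Arguments Vl {_} _.
Arguments Vl_inv {_} _.
Arguments Vr {_} _.
Arguments Vr_inv {_} _.
Arguments Vs {_} _ _.
Arguments Vihom {_} _ _.
Arguments Vev {_} _ _.
Arguments Vcurry {_ _ _ _} _.

Definition is_mono {V : SMCC} {X Y : Vob V} (h : Vhom X Y) : Prop :=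
  forall W (u v : Vhom W X), Vcomp h u = Vcomp h v -> u = v.

Definition is_iso {V : SMCC} {X Y : Vob V} (h : Vhom X Y) : Prop :=
  exists h' : Vhom Y X, Vcomp h' h = Vid X /\ Vcomp h h' = Vid Y.

Definition is_pullback {V : SMCC} {P X Y Z : Vob V}
  (a : Vhom P X) (b : Vhom P Y) (f : Vhom X Z) (g : Vhom Y Z) : Prop :=
  Vcomp f a = Vcomp g b /\
  forall W (u : Vhom W X) (v : Vhom W Y), Vcomp f u = Vcomp g v ->
    exists! w : Vhom W P, Vcomp a w = u /\ Vcomp b w = v.

Definition is_wide_pullback {V : SMCC} {I : Type} {Y : I -> Vob V} {P Z : Vob V}
  (f : forall i, Vhom (Y i) Z) (a : forall i, Vhom P (Y i)) (d : Vhom P Z) : Prop :=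
  (forall i, Vcomp (f i) (a i) = d) /\
  forall W (u : forall i, Vhom W (Y i)) (v : Vhom W Z),
    (forall i, Vcomp (f i) (u i) = v) ->
    exists! w : Vhom W P, (forall i, Vcomp (a i) w = u i) /\ Vcomp d w = v.

Record VCat (V : SMCC) := {
  Bob : Type;
  Bhom : Bob -> Bob -> Vob V;
  Bcomp : forall A B C, Vhom (Vten (Bhom B C) (Bhom A B)) (Bhom A C);
  Bid : forall A, Vhom VI (Bhom A A);
  Bassoc : forall A B C D,
      Vcomp (Bcomp A C D) (Vcomp (Vtenm (Vid (Bhom C D)) (Bcomp A B C))
                                 (Va (Bhom C D) (Bhom B C) (Bhom A B)))
      = Vcomp (Bcomp A B D) (Vtenm (Bcomp B C D) (Vid (Bhom A B)));
  Bunit_l : forall A B,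
      Vcomp (Bcomp A B B) (Vtenm (Bid B) (Vid (Bhom A B))) = Vl (Bhom A B);
  Bunit_r : forall A B,
      Vcomp (Bcomp A A B) (Vtenm (Vid (Bhom A B)) (Bid A)) = Vr (Bhom A B)
}.

Arguments Bob {_} _.
Arguments Bhom {_} _ _ _.
Arguments Bcomp {_} _ _ _ _.
Arguments Bid {_} _ _.

Section VCatNotions.
Context {V : SMCC} (B : VCat V).

(* morphisms of the underlying ordinary category *)
Definition Arr (A C : Bob B) : Type := Vhom (@VI V) (Bhom B A C).

Definition acomp {A C D : Bob B} (g : Arr C D) (f : Arr A C) : Arr A D :=
  Vcomp (Bcomp B A C D) (Vcomp (Vtenm g f) (Vl_inv VI)).

Definition postc (A : Bob B) {C1 C2 : Bob B} (m : Arr C1 C2)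
  : Vhom (Bhom B A C1) (Bhom B A C2) :=
  Vcomp (Bcomp B A C1 C2) (Vcomp (Vtenm m (Vid (Bhom B A C1))) (Vl_inv (Bhom B A C1))).

Definition prec {A1 A2 : Bob B} (e : Arr A1 A2) (C : Bob B)
  : Vhom (Bhom B A2 C) (Bhom B A1 C) :=
  Vcomp (Bcomp B A1 A2 C) (Vcomp (Vtenm (Vid (Bhom B A2 C)) e) (Vr_inv (Bhom B A2 C))).

Definition Class : Type := forall A C : Bob B, Arr A C -> Prop.

Definition VMono : Class := fun A C m => forall X, is_mono (postc X m).

Definition VEpi : Class := fun A C e => forall X, is_mono (prec e X).

Definition vorth {A1 A2 C1 C2 : Bob B} (e : Arr A1 A2) (m : Arr C1 C2) : Prop :=
  is_pullback (prec e C1) (postc A2 m) (postc A1 m) (prec e C2).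

Definition StrEpi : Class := fun A1 A2 e =>
  VEpi A1 A2 e /\ forall C1 C2 (m : Arr C1 C2), VMono C1 C2 m -> vorth e m.

Definition VFactSystem (E M : Class) : Prop :=
  (forall C1 C2 (m : Arr C1 C2),
      M C1 C2 m <-> forall A1 A2 (e : Arr A1 A2), E A1 A2 e -> vorth e m) /\
  (forall A1 A2 (e : Arr A1 A2),
      E A1 A2 e <-> forall C1 C2 (m : Arr C1 C2), M C1 C2 m -> vorth e m) /\
  (forall A C (f : Arr A C), exists (D : Bob B) (e : Arr A D) (m : Arr D C),
      E A D e /\ M D C m /\ f = acomp m e).

Definition is_vpullback {P A D C : Bob B} (p1 : Arr P A) (p2 : Arr P D)
  (f : Arr A C) (g : Arr D C) : Prop :=
  acomp f p1 = acomp g p2 /\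
  forall X, is_pullback (postc X p1) (postc X p2) (postc X f) (postc X g).

(* V-cokernel-pair of f : A -> D, i.e. a V-kernel-pair in B^op:
   the hom functors B(-,X) send it to pullbacks in V *)
Definition is_vcokernel_pair {A D Q : Bob B} (f : Arr A D) (q1 q2 : Arr D Q) : Prop :=
  acomp q1 f = acomp q2 f /\
  forall X, is_pullback (prec q1 X) (prec q2 X) (prec f X) (prec f X).

Definition is_vintersection {I : Type} {Ci : I -> Bob B} {C P : Bob B}
  (m : forall i, Arr (Ci i) C) (p : forall i, Arr P (Ci i)) (d : Arr P C) : Prop :=
  (forall i, acomp (m i) (p i) = d) /\
  forall X, is_wide_pullback (fun i => postc X (m i)) (fun i => postc X (p i)) (postc X d).

(* cotensor [X, C] with counit eps : X -> B([X,C], C): the induced map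
   B(A,[X,C]) -> [X, B(A,C)] is an isomorphism for every A *)
Definition cotensor_map {X : Vob V} {Cc C : Bob B} (eps : Vhom X (Bhom B Cc C)) (A : Bob B)
  : Vhom (Bhom B A Cc) (Vihom X (Bhom B A C)) :=
  Vcurry (Vcomp (Bcomp B A Cc C) (Vcomp (Vtenm eps (Vid (Bhom B A Cc))) (Vs (Bhom B A Cc) X))).

Definition is_cotensored : Prop :=
  forall (X : Vob V) (C : Bob B), exists (Cc : Bob B) (eps : Vhom X (Bhom B Cc C)),
    forall A, is_iso (cotensor_map eps A).

Definition has_vcokernel_pairs : Prop :=
  forall A D (f : Arr A D), exists Q (q1 q2 : Arr D Q), is_vcokernel_pair f q1 q2.

Definition has_vpullbacks_of_vmonos : Prop :=
  forall A D C (f : Arr A C) (m : Arr D C), VMono D C m ->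
    exists P (p1 : Arr P A) (p2 : Arr P D), is_vpullback p1 p2 f m.

Definition has_vintersections_of_vmonos : Prop :=
  forall (I : Type) (Ci : I -> Bob B) (C : Bob B) (m : forall i, Arr (Ci i) C),
    (forall i, VMono (Ci i) C (m i)) ->
    exists P (p : forall i, Arr P (Ci i)) (d : Arr P C), is_vintersection m p d.

End VCatNotions.

(* Main.v *)
Require Import Defs.
From Stdlib Require Import Setoid.

Section Mon.
Variable V : SMCC.
Local Notation "g ∘ f" := (@Vcomp V _ _ _ g f) (at level 40, left associativity).
Local Notation "f ⊗ g" := (@Vtenm V _ _ _ _ f g) (at level 35).
Local Notation I := (@VI V).

Lemma cA {X Y Z W : Vob V} (h : Vhom Z W) (g : Vhom Y Z) (f : Vhom X Y) :
  h ∘ (g ∘ f) = h ∘ g ∘ f.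
Proof. apply Vcomp_assoc. Qed.
Lemma idl {X Y : Vob V} (f : Vhom X Y) : Vid Y ∘ f = f.
Proof. apply Vid_l. Qed.
Lemma idr {X Y : Vob V} (f : Vhom X Y) : f ∘ Vid X = f.
Proof. apply Vid_r. Qed.
Lemma tid (X Y : Vob V) : Vid X ⊗ Vid Y = Vid (Vten X Y).
Proof. apply Vtenm_id. Qed.
Lemma tcomp {X X' X'' Y Y' Y'' : Vob V} (f : Vhom X X') (f' : Vhom X' X'')
      (g : Vhom Y Y') (g' : Vhom Y' Y'') :
  (f' ∘ f) ⊗ (g' ∘ g) = (f' ⊗ g') ∘ (f ⊗ g).
Proof. apply Vtenm_comp. Qed.

Lemma tsplit1 {X X' Y Y' : Vob V} (f : Vhom X X') (g : Vhom Y Y') :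
  f ⊗ g = (f ⊗ Vid Y') ∘ (Vid X ⊗ g).
Proof. rewrite <- tcomp, idl, idr. reflexivity. Qed.
Lemma tsplit2 {X X' Y Y' : Vob V} (f : Vhom X X') (g : Vhom Y Y') :
  f ⊗ g = (Vid X' ⊗ g) ∘ (f ⊗ Vid Y).
Proof. rewrite <- tcomp, idl, idr. reflexivity. Qed.
Lemma tswap {X X' Y Y' : Vob V} (f : Vhom X X') (g : Vhom Y Y') :
  (f ⊗ Vid Y') ∘ (Vid X ⊗ g) = (Vid X' ⊗ g) ∘ (f ⊗ Vid Y).
Proof. rewrite <- tsplit1, <- tsplit2. reflexivity. Qed.

Lemma t1comp {X Y Y' Y'' : Vob V} (g : Vhom Y' Y'') (f : Vhom Y Y') :
  Vid X ⊗ (g ∘ f) = (Vid X ⊗ g) ∘ (Vid X ⊗ f).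
Proof. rewrite <- tcomp, idl. reflexivity. Qed.
Lemma tcomp1 {X X' X'' Y : Vob V} (g : Vhom X' X'') (f : Vhom X X') :
  (g ∘ f) ⊗ Vid Y = (g ⊗ Vid Y) ∘ (f ⊗ Vid Y).
Proof. rewrite <- tcomp, idl. reflexivity. Qed.

Lemma anat {X X' Y Y' Z Z' : Vob V} (f : Vhom X X') (g : Vhom Y Y') (h : Vhom Z Z') :
  Va X' Y' Z' ∘ ((f ⊗ g) ⊗ h) = (f ⊗ (g ⊗ h)) ∘ Va X Y Z.
Proof. apply Va_nat. Qed.
Lemma snat {X X' Y Y' : Vob V} (f : Vhom X X') (g : Vhom Y Y') :
  Vs X' Y' ∘ (f ⊗ g) = (g ⊗ f) ∘ Vs X Y.
Proof. apply Vs_nat. Qed.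

Lemma ctx {X Y Z W : Vob V} (g : Vhom Y Z) (f : Vhom X Y) (h : Vhom X Z) (k : Vhom Z W) :
  g ∘ f = h -> k ∘ g ∘ f = k ∘ h.
Proof. intro E. rewrite <- cA, E. reflexivity. Qed.

Lemma cancel_r {X Y Z : Vob V} (g g' : Vhom Y Z) (h : Vhom X Y) (h' : Vhom Y X) :
  h ∘ h' = Vid Y -> g ∘ h = g' ∘ h -> g = g'.
Proof.
  intros E H. rewrite <- (idr g), <- (idr g'), <- E, !cA, H. reflexivity.
Qed.
Lemma cancel_l {X Y Z : Vob V} (g g' : Vhom X Y) (h : Vhom Y Z) (h' : Vhom Z Y) :
  h' ∘ h = Vid Y -> h ∘ g = h ∘ g' -> g = g'.
Proof.
  intros E H. rewrite <- (idl g), <- (idl g'), <- E, <- !cA, H. reflexivity.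
Qed.

Lemma linvn {X Y : Vob V} (f : Vhom X Y) : Vl_inv Y ∘ f = (Vid I ⊗ f) ∘ Vl_inv X.
Proof.
  apply (cancel_r _ _ (Vl X) (Vl_inv X)); [apply Vl_iso2|].
  rewrite <- !cA, Vl_iso1, idr, (Vl_nat V), cA, Vl_iso1, idl. reflexivity.
Qed.
Lemma rinvn {X Y : Vob V} (f : Vhom X Y) : Vr_inv Y ∘ f = (f ⊗ Vid I) ∘ Vr_inv X.
Proof.
  apply (cancel_r _ _ (Vr X) (Vr_inv X)); [apply Vr_iso2|].
  rewrite <- !cA, Vr_iso1, idr, (Vr_nat V), cA, Vr_iso1, idl. reflexivity.
Qed.

Lemma tl1_inj {X Y : Vob V} (f g : Vhom X Y) : Vid I ⊗ f = Vid I ⊗ g -> f = g.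
Proof.
  intro H. apply (cancel_r _ _ (Vl X) (Vl_inv X)); [apply Vl_iso2|].
  rewrite !(Vl_nat V), H. reflexivity.
Qed.
Lemma tr1_inj {X Y : Vob V} (f g : Vhom X Y) : f ⊗ Vid I = g ⊗ Vid I -> f = g.
Proof.
  intro H. apply (cancel_r _ _ (Vr X) (Vr_inv X)); [apply Vr_iso2|].
  rewrite !(Vr_nat V), H. reflexivity.
Qed.

Lemma t_iso {X X' Y : Vob V} (h : Vhom X X') (h' : Vhom X' X) :
  h ∘ h' = Vid X' -> (h ⊗ Vid Y) ∘ (h' ⊗ Vid Y) = Vid _.
Proof. intro E. rewrite <- tcomp, E, idl, tid. reflexivity. Qed.
Lemma t_iso' {X Y Y' : Vob V} (h : Vhom Y Y') (h' : Vhom Y' Y) :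
  h ∘ h' = Vid Y' -> (Vid X ⊗ h) ∘ (Vid X ⊗ h') = Vid _.
Proof. intro E. rewrite <- tcomp, E, idl, tid. reflexivity. Qed.

Lemma ainvn {X X' Y Y' Z Z' : Vob V} (f : Vhom X X') (g : Vhom Y Y') (h : Vhom Z Z') :
  Va_inv V X' Y' Z' ∘ (f ⊗ (g ⊗ h)) = ((f ⊗ g) ⊗ h) ∘ Va_inv V X Y Z.
Proof.
  apply (cancel_r _ _ (Va X Y Z) (Va_inv V X Y Z)); [apply Va_iso2|].
  rewrite <- !cA, (Va_iso1 V), idr, <- (Va_nat V), cA, (Va_iso1 V), idl. reflexivity.
Qed.

(* Kelly's lemmas *)
Lemma K1 (X Y : Vob V) : Vl (Vten X Y) ∘ Va I X Y = Vl X ⊗ Vid Y.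
Proof.
  apply tl1_inj.
  set (G := Va I (Vten I X) Y ∘ (Va I I X ⊗ Vid Y)).
  set (G' := (Va_inv V I I X ⊗ Vid Y) ∘ Va_inv V I (Vten I X) Y).
  assert (HG : G ∘ G' = Vid _).
  { unfold G, G'. rewrite <- !cA, (cA (Va I I X ⊗ Vid Y)), (t_iso _ _ (Va_iso2 V _ _ _)), idl.
    apply Va_iso2. }
  apply (cancel_r _ _ G G' HG). unfold G.
  rewrite t1comp, <- !cA, <- (Vpentagon V), !cA.
  rewrite (Vtriangle V), <- (tid X Y), <- (Va_nat V), <- (Vtriangle V), tcomp1.
  rewrite cA, (Va_nat V). reflexivity.
Qed.


Lemma K2 (X Y : Vob V) : (Vid X ⊗ Vr Y) ∘ Va X Y I = Vr (Vten X Y).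
Proof.
  symmetry. apply tr1_inj.
  apply (cancel_l _ _ (Va X Y I) (Va_inv V X Y I)); [apply Va_iso1|].
  rewrite <- (Vtriangle V (Vten X Y) I), <- (tid X Y), cA, (Va_nat V), <- cA, (Vpentagon V).
  rewrite !cA, <- t1comp, (Vtriangle V), <- (Va_nat V), tcomp1, !cA. reflexivity.
Qed.

Lemma lI_nat (X : Vob V) : Vl (Vten I X) = Vid I ⊗ Vl X.
Proof.
  apply (cancel_l _ _ (Vl X) (Vl_inv X)); [apply Vl_iso1|]. apply Vl_nat.
Qed.

Lemma K3 : Vl (@VI V) = Vr (@VI V).
Proof.
  apply tr1_inj. rewrite <- K1, <- (Vtriangle V), lI_nat. reflexivity.
Qed.

Lemma K1i (Y Z : Vob V) : Va I Y Z ∘ (Vl_inv Y ⊗ Vid Z) = Vl_inv (Vten Y Z).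
Proof.
  apply (cancel_l _ _ (Vl (Vten Y Z)) (Vl_inv _)); [apply Vl_iso1|].
  rewrite cA, K1, <- tcomp, (Vl_iso2 V), idl, tid, (Vl_iso2 V). reflexivity.
Qed.
Lemma K2i (X Y : Vob V) : Va X Y I ∘ Vr_inv (Vten X Y) = Vid X ⊗ Vr_inv Y.
Proof.
  apply (cancel_l _ _ (Vid X ⊗ Vr Y) (Vid X ⊗ Vr_inv Y)); [apply t_iso'; apply Vr_iso1|].
  rewrite cA, K2, (Vr_iso2 V), <- t1comp, (Vr_iso2 V), tid. reflexivity.
Qed.
Lemma Tri (X Y : Vob V) : Va_inv V X I Y ∘ (Vid X ⊗ Vl_inv Y) = Vr_inv X ⊗ Vid Y.
Proof.
  apply (cancel_l _ _ (Vr X ⊗ Vid Y) (Vr_inv X ⊗ Vid Y)); [apply t_iso; apply Vr_iso1|].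
  rewrite <- tcomp1, (Vr_iso2 V), tid.
  rewrite <- (Vtriangle V), <- !cA, (cA (Va X I Y)), (Va_iso2 V), idl, <- t1comp, (Vl_iso2 V),
     tid. reflexivity.
Qed.

Tactic Notation "rw" uconstr(L) := first [rewrite L | rewrite (ctx _ _ _ _ L)]; rewrite ?cA.
Tactic Notation "rwb" uconstr(L) := first [rewrite <- L | rewrite (ctx _ _ _ _ (eq_sym L))]; rewrite ?cA.
Section BL.
Variable B : VCat V.
Local Notation "g ∘ f" := (@Vcomp V _ _ _ g f) (at level 40, left associativity).
Local Notation "f ⊗ g" := (@Vtenm V _ _ _ _ f g) (at level 35).
Local Notation I := (@VI V).
Local Notation comp := (Bcomp B).
Local Notation H := (Bhom B).

Lemma K3i : Vl_inv (@VI V) = Vr_inv (@VI V).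
Proof.
  apply (cancel_l _ _ (Vr I) (Vr_inv I)); [apply Vr_iso1|].
  rewrite <- K3 at 1. rewrite (Vl_iso2 V), (Vr_iso2 V). reflexivity.
Qed.

Lemma F1 {X C1 C2 : Bob B} (m : Arr B C1 C2) (a : Arr B X C1) :
  postc B X m ∘ a = acomp B m a.
Proof.
  unfold postc, acomp. rewrite !cA. rw (linvn _). rwb (tcomp _ _ _ _). rewrite idl, idr. reflexivity.
Qed.

Lemma F2 {A1 A2 X : Bob B} (e : Arr B A1 A2) (a : Arr B A2 X) :
  prec B e X ∘ a = acomp B a e.
Proof.
  unfold prec, acomp. rewrite !cA. rw (rinvn _). rwb (tcomp _ _ _ _). rewrite idl, idr, K3i. reflexivity.
Qed.


Lemma F7 {X K C1 C2 : Bob B} (m : Arr B C1 C2) :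
  comp X K C2 ∘ (postc B K m ⊗ Vid (H X K)) = postc B X m ∘ comp X K C1.
Proof.
  unfold postc. rewrite !tcomp1, !cA, <- Bassoc, !cA. rw (anat _ _ _). rewrite tid.
  rw (K1i _ _). rwb (tswap _ _). rwb (linvn _). reflexivity.
Qed.


Lemma F8 {A1 A2 K C : Bob B} (e : Arr B A1 A2) :
  prec B e C ∘ comp A2 K C = comp A1 K C ∘ (Vid (H K C) ⊗ prec B e K).
Proof.
  unfold prec. rewrite !cA. rw (rinvn _). rwb (tswap _ _). rewrite <- Bassoc, !cA.
  rewrite <- (tid (H K C) (H A2 K)). rw (anat _ _ _). rw (K2i _ _).
  rewrite !t1comp, !cA. reflexivity.
Qed.

Lemma Bassoc' (A Bo C D : Bob B) :
  comp A C D ∘ (Vid (H C D) ⊗ comp A Bo C) =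
  comp A Bo D ∘ (comp Bo C D ⊗ Vid (H A Bo)) ∘ Va_inv V _ _ _.
Proof.
  rewrite <- Bassoc, <- !cA, (Va_iso2 V), idr. reflexivity.
Qed.

Lemma F6 {X K1 K2 C : Bob B} (m : Arr B K1 K2) :
  comp X K2 C ∘ (Vid (H K2 C) ⊗ postc B X m) = comp X K1 C ∘ (prec B m C ⊗ Vid (H X K1)).
Proof.
  unfold postc, prec. rewrite !t1comp, !tcomp1, !cA, Bassoc'. rw (ainvn _ _ _). rw (Tri _ _).
  reflexivity.
Qed.

Lemma postc_def (X : Bob B) {C1 C2 : Bob B} (m : Arr B C1 C2) :
  postc B X m = comp X C1 C2 ∘ (m ⊗ Vid _) ∘ Vl_inv _.
Proof. unfold postc. rewrite cA. reflexivity. Qed.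
Lemma prec_def {A1 A2 : Bob B} (e : Arr B A1 A2) (C : Bob B) :
  prec B e C = comp A1 A2 C ∘ (Vid _ ⊗ e) ∘ Vr_inv _.
Proof. unfold prec. rewrite cA. reflexivity. Qed.

Lemma postc_id (X C : Bob B) : postc B X (Bid B C) = Vid _.
Proof. rewrite postc_def, Bunit_l, (Vl_iso2 V). reflexivity. Qed.
Lemma prec_id (X C : Bob B) : prec B (Bid B X) C = Vid _.
Proof. rewrite prec_def, Bunit_r, (Vr_iso2 V). reflexivity. Qed.

Lemma postc_comp {X A1 A2 A3 : Bob B} (g : Arr B A2 A3) (f : Arr B A1 A2) :
  postc B X (acomp B g f) = postc B X g ∘ postc B X f.
Proof.
  rewrite (postc_def X (acomp B g f)), (postc_def X f), !cA, <- F7, ?cA.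
  rwb (tcomp1 _ _). rewrite F1. reflexivity.
Qed.

Lemma prec_comp {A1 A2 A3 X : Bob B} (g : Arr B A2 A3) (f : Arr B A1 A2) :
  prec B (acomp B g f) X = prec B f X ∘ prec B g X.
Proof.
  rewrite (prec_def (acomp B g f)), (prec_def g), !cA, F8, ?cA.
  rwb (t1comp _ _). rewrite F2. reflexivity.
Qed.

Lemma F5 {A1 A2 C1 C2 : Bob B} (e : Arr B A1 A2) (m : Arr B C1 C2) :
  prec B e C2 ∘ postc B A2 m = postc B A1 m ∘ prec B e C1.
Proof.
  rewrite (postc_def A2 m), (postc_def A1 m), !cA, F8, ?cA.
  rwb (tswap _ _). rwb (linvn _). reflexivity.
Qed.

Lemma acomp_assoc {A1 A2 A3 A4 : Bob B} (h : Arr B A3 A4) (g : Arr B A2 A3) (f : Arr B A1 A2) :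
  acomp B (acomp B h g) f = acomp B h (acomp B g f).
Proof. rewrite <- (F1 (acomp B h g) f), postc_comp, <- cA, !F1. reflexivity. Qed.
Lemma acomp_idl {A C : Bob B} (f : Arr B A C) : acomp B (Bid B C) f = f.
Proof. rewrite <- F1, postc_id, idl. reflexivity. Qed.
Lemma acomp_idr {A C : Bob B} (f : Arr B A C) : acomp B f (Bid B A) = f.
Proof. rewrite <- F2, prec_id, idl. reflexivity. Qed.


Lemma curry_ev {Z X Y : Vob V} (f : Vhom (Vten Z X) Y) : Vev X Y ∘ (Vcurry f ⊗ Vid X) = f.
Proof. apply Vcurry_ev. Qed.
Lemma curry_uniq {Z X Y : Vob V} (f : Vhom (Vten Z X) Y) (g : Vhom Z (Vihom X Y)) :
  Vev X Y ∘ (g ⊗ Vid X) = f -> g = Vcurry f.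
Proof. apply Vcurry_uniq. Qed.

Lemma mono_comp {X Y Z : Vob V} (g : Vhom Y Z) (f : Vhom X Y) :
  is_mono g -> is_mono f -> is_mono (g ∘ f).
Proof. intros Hg Hf W u v E. apply Hf, Hg. rewrite !cA. exact E. Qed.
Lemma split_mono {X Y : Vob V} (r : Vhom Y X) (f : Vhom X Y) : r ∘ f = Vid X -> is_mono f.
Proof. intros E W u v Hh. rewrite <- (idl u), <- (idl v), <- E, <- !cA, Hh. reflexivity. Qed.

Lemma Tkey {W : Vob V} {Cc C : Bob B} (eps : Vhom W (H Cc C)) (A : Bob B) (h : Arr B A Cc) :
  Vev _ _ ∘ ((cotensor_map B eps A ∘ h) ⊗ Vid W) = prec B h C ∘ eps ∘ (Vr W ∘ Vs I W).
Proof.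
  rewrite tcomp1, cA. unfold cotensor_map. rewrite curry_ev, !cA. rw (snat _ _).
  rwb (tcomp _ _ _ _). rewrite idl, idr, prec_def. rw (rinvn _). rw (Vr_iso1 V _).
  rewrite idr. rwb (tcomp _ _ _ _). rewrite idl, idr. reflexivity.
Qed.

Lemma T_inj {W : Vob V} {Cc C : Bob B} (eps : Vhom W (H Cc C)) (A : Bob B)
  (Hi : is_iso (cotensor_map B eps A)) (h1 h2 : Arr B A Cc) :
  prec B h1 C ∘ eps = prec B h2 C ∘ eps -> h1 = h2.
Proof.
  intro E. destruct Hi as [phi' [Hi1 Hi2]].
  apply (cancel_l _ _ _ _ Hi1).
  rewrite (curry_uniq _ _ (Tkey eps A h1)), (curry_uniq _ _ (Tkey eps A h2)), E. reflexivity.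
Qed.

Lemma T_surj {W : Vob V} {Cc C : Bob B} (eps : Vhom W (H Cc C)) (A : Bob B)
  (Hi : is_iso (cotensor_map B eps A)) (u : Vhom W (H A C)) :
  exists h : Arr B A Cc, prec B h C ∘ eps = u.
Proof.
  destruct Hi as [phi' [Hi1 Hi2]].
  exists (phi' ∘ Vcurry (u ∘ (Vr W ∘ Vs I W))).
  assert (Hr : (Vr W ∘ Vs I W) ∘ (Vs W I ∘ Vr_inv W) = Vid _).
  { rewrite !cA. rw (Vs_invol V _ _). rewrite idr. apply Vr_iso2. }
  apply (cancel_r _ _ _ _ Hr). rewrite <- Tkey, cA, Hi2, idl, curry_ev. reflexivity.
Qed.

Lemma mW_mono {W : Vob V} {K1 K2 C1 C2 : Bob B} (eps1 : Vhom W (H K1 C1)) (eps2 : Vhom W (H K2 C2))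
  (Hi1 : forall A, is_iso (cotensor_map B eps1 A))
  (m : Arr B C1 C2) (Hm : VMono B C1 C2 m) (mW : Arr B K1 K2)
  (HmW : prec B mW C2 ∘ eps2 = postc B K1 m ∘ eps1) : VMono B K1 K2 mW.
Proof.
  intros X Z z1 z2 E.
  assert (Cl : forall z : Vhom Z (H X K1),
    postc B X m ∘ (Vev _ _ ∘ ((cotensor_map B eps1 X ∘ z) ⊗ Vid W)) =
    comp X K2 C2 ∘ (eps2 ⊗ Vid _) ∘ Vs _ _ ∘ ((postc B X mW ∘ z) ⊗ Vid W)).
  { intro z. rewrite tcomp1, !cA. unfold cotensor_map. rw (curry_ev _). rewrite <- F7.
    rwb (tcomp1 _ _). rewrite <- HmW, tcomp1, !cA, <- F6. rwb (tswap _ _).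
    rwb (snat _ _). rwb (tcomp1 _ _). reflexivity. }
  destruct (Hi1 X) as [phi' [H1 H2]].
  apply (cancel_l _ _ _ _ H1).
  rewrite (curry_uniq _ _ (eq_refl (Vev _ _ ∘ ((cotensor_map B eps1 X ∘ z1) ⊗ Vid W)))).
  rewrite (curry_uniq _ _ (eq_refl (Vev _ _ ∘ ((cotensor_map B eps1 X ∘ z2) ⊗ Vid W)))).
  f_equal. apply (Hm X). rewrite !Cl, E. reflexivity.
Qed.


Lemma vmono_comp {A1 A2 A3 : Bob B} (g : Arr B A2 A3) (f : Arr B A1 A2) :
  VMono B _ _ g -> VMono B _ _ f -> VMono B _ _ (acomp B g f).
Proof. intros Hg Hf X. rewrite postc_comp. apply mono_comp; auto. Qed.
Lemma vmono_split {A1 A2 : Bob B} (r : Arr B A2 A1) (f : Arr B A1 A2) :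
  acomp B r f = Bid B A1 -> VMono B _ _ f.
Proof. intros E X. apply (split_mono (postc B X r)). rewrite <- postc_comp, E, postc_id. reflexivity. Qed.
Lemma vepi_split {A1 A2 : Bob B} (f : Arr B A1 A2) (r : Arr B A2 A1) :
  acomp B f r = Bid B A2 -> VEpi B _ _ f.
Proof. intros E X. apply (split_mono (prec B r X)). rewrite <- prec_comp, E, prec_id. reflexivity. Qed.
Lemma vmono_cancel {A C D : Bob B} (m : Arr B C D) (x y : Arr B A C) :
  VMono B _ _ m -> acomp B m x = acomp B m y -> x = y.
Proof. intros Hm E. apply (Hm A VI). rewrite !F1. exact E. Qed.

Lemma vorth_elem {A1 A2 C1 C2 : Bob B} (e : Arr B A1 A2) (m : Arr B C1 C2)
  (a : Arr B A1 C1) (b : Arr B A2 C2) :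
  vorth B e m -> acomp B m a = acomp B b e ->
  exists w, acomp B w e = a /\ acomp B m w = b.
Proof.
  intros [_ Ho] E. destruct (Ho VI a b) as [w [[H1 H2] _]].
  - rewrite F1, F2. exact E.
  - exists w. rewrite <- (F2 e w), <- (F1 m w). auto.
Qed.

Lemma vint_mono {Ix : Type} {Ci : Ix -> Bob B} {C P : Bob B}
  (m : forall i, Arr B (Ci i) C) (p : forall i, Arr B P (Ci i)) (d : Arr B P C) :
  is_vintersection B m p d -> (forall i, VMono B _ _ (m i)) -> VMono B _ _ d.
Proof.
  intros [_ Hd] Hm X W z1 z2 E. destruct (Hd X) as [Hc Hu].
  destruct (Hu W (fun i => postc B X (p i) ∘ z1) (postc B X d ∘ z1)) as [w [_ Huq]].
  { intro i. rewrite cA, Hc. reflexivity. }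
  transitivity w; [symmetry|]; apply Huq; split; auto.
  intro i. apply (Hm i X). rewrite !cA, Hc, E. reflexivity.
Qed.

Lemma vpb_mono {P A D C : Bob B} (p1 : Arr B P A) (p2 : Arr B P D) (f : Arr B A C) (m : Arr B D C) :
  is_vpullback B p1 p2 f m -> VMono B _ _ m -> VMono B _ _ p1.
Proof.
  intros [_ Hp] Hm X W z1 z2 E. destruct (Hp X) as [Hc Hu].
  destruct (Hu W (postc B X p1 ∘ z1) (postc B X p2 ∘ z1)) as [w [_ Huq]].
  { rewrite !cA, Hc. reflexivity. }
  transitivity w; [symmetry|]; apply Huq; split; auto.
  apply (Hm X). rewrite !cA, <- Hc, <- !cA, E. reflexivity.
Qed.

Lemma vpb_elem {P A D C X : Bob B} (p1 : Arr B P A) (p2 : Arr B P D) (f : Arr B A C) (m : Arr B D C)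
  (a : Arr B X A) (b : Arr B X D) :
  is_vpullback B p1 p2 f m -> acomp B f a = acomp B m b ->
  exists k, acomp B p1 k = a /\ acomp B p2 k = b.
Proof.
  intros [_ Hp] E. destruct (proj2 (Hp X) VI a b) as [k [[H1 H2] _]].
  - rewrite !F1. exact E.
  - exists k. rewrite <- !F1. auto.
Qed.

Lemma cok_elem {A D Q X : Bob B} (e : Arr B A D) (q1 q2 : Arr B D Q) (a b : Arr B D X) :
  is_vcokernel_pair B e q1 q2 -> acomp B a e = acomp B b e ->
  exists c, acomp B c q1 = a /\ acomp B c q2 = b.
Proof.
  intros [_ Hq] E. destruct (proj2 (Hq X) VI a b) as [c [[H1 H2] _]].
  - rewrite !F2. exact E.
  - exists c. rewrite <- !F2. auto.
Qed.

Lemma cok_epi {A D Q : Bob B} (e : Arr B A D) (q : Arr B D Q) :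
  is_vcokernel_pair B e q q -> VEpi B _ _ e.
Proof.
  intros [_ Hq] X W u v E. destruct (proj2 (Hq X) W u v E) as [w [[H1 H2] _]].
  rewrite <- H1. exact H2.
Qed.


Lemma factor (Hcot : is_cotensored B) (Hcok : has_vcokernel_pairs B)
  (Hpb : has_vpullbacks_of_vmonos B) (Hint : has_vintersections_of_vmonos B)
  (A C : Bob B) (f : Arr B A C) :
  exists D (e : Arr B A D) (m : Arr B D C), StrEpi B A D e /\ VMono B D C m /\ f = acomp B m e.
Proof.
  pose (Ix := {D : Bob B & {mm : Arr B D C & {g : Arr B A D | VMono B D C mm /\ f = acomp B mm g}}}).
  destruct (Hint Ix (fun i => projT1 i) C (fun i => projT1 (projT2 i))
              (fun i => proj1 (proj2_sig (projT2 (projT2 i))))) as [P [p [d Hd]]].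
  assert (dmono : VMono B P C d).
  { apply (vint_mono _ _ _ Hd). intro i. exact (proj1 (proj2_sig (projT2 (projT2 i)))). }
  destruct Hd as [Hd1 Hd2].
  destruct (proj2 (Hd2 A) VI (fun i => proj1_sig (projT2 (projT2 i))) f) as [e [[He1 He2] _]].
  { intro i. rewrite F1. symmetry. exact (proj2 (proj2_sig (projT2 (projT2 i)))). }
  rewrite F1 in He2.
  assert (Hmin : forall P' (n : Arr B P' P) (k : Arr B A P'), VMono B _ _ n -> acomp B n k = e ->
            exists pi : Arr B P P', acomp B n pi = Bid B P /\ acomp B pi e = k).
  { intros P' n k Hn Hk.
    assert (Hf : VMono B _ _ (acomp B d n) /\ f = acomp B (acomp B d n) k).
    { split. apply vmono_comp; auto. rewrite acomp_assoc, Hk, He2. reflexivity. }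
    pose (j := existT (fun D => {mm : Arr B D C & {g : Arr B A D | VMono B D C mm /\ f = acomp B mm g}})
                 P' (existT _ (acomp B d n) (exist _ k Hf)) : Ix).
    exists (p j). split.
    - apply (vmono_cancel d); auto. rewrite acomp_idr, <- acomp_assoc. exact (Hd1 j).
    - rewrite <- F1. exact (He1 j). }
  assert (Hepi : VEpi B A P e).
  { destruct (Hcok _ _ e) as [Q [q1 [q2 Hq]]].
    destruct (cok_elem e q1 q2 (Bid B P) (Bid B P) Hq eq_refl) as [nab [Hn1 Hn2]].
    assert (q1m : VMono B _ _ q1) by (apply (vmono_split nab); exact Hn1).
    destruct (Hpb _ _ _ q2 q1 q1m) as [P' [p1 [p2 Hpp]]].
    assert (p1m : VMono B _ _ p1) by (apply (vpb_mono p1 p2 q2 q1 Hpp q1m)).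
    destruct (vpb_elem p1 p2 q2 q1 e e Hpp) as [k [Hk1 Hk2]].
    { symmetry. exact (proj1 Hq). }
    destruct (Hmin P' p1 k p1m Hk1) as [pi [Hpi1 Hpi2]].
    assert (Eq2 : q2 = acomp B q1 (acomp B p2 pi)).
    { transitivity (acomp B q2 (acomp B p1 pi)); [rewrite Hpi1, acomp_idr; reflexivity|].
      rewrite <- acomp_assoc, (proj1 Hpp), acomp_assoc. reflexivity. }
    assert (Es : acomp B p2 pi = Bid B P).
    { transitivity (acomp B nab (acomp B q1 (acomp B p2 pi))).
      - rewrite <- acomp_assoc, Hn1, acomp_idl. reflexivity.
      - rewrite <- Eq2. exact Hn2. }
    assert (Eq : q2 = q1) by (rewrite Eq2, Es, acomp_idr; reflexivity).
    rewrite Eq in Hq. exact (cok_epi e q1 Hq). }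
  exists P, e, d. split; [|split; [exact dmono | symmetry; exact He2]].
  split; [exact Hepi|].
  intros C1 C2 m Hm. split.
  { symmetry. apply F5. }
  intros W u v Huv.
  destruct (Hcot W C1) as [K1 [eps1 Hi1]].
  destruct (Hcot W C2) as [K2 [eps2 Hi2]].
  destruct (T_surj eps1 A (Hi1 A) u) as [u' Hu'].
  destruct (T_surj eps2 P (Hi2 P) v) as [v' Hv'].
  destruct (T_surj eps2 K1 (Hi2 K1) (postc B K1 m ∘ eps1)) as [mW HmW].
  assert (mWm : VMono B _ _ mW) by exact (mW_mono eps1 eps2 Hi1 m Hm mW HmW).
  assert (Esq : acomp B v' e = acomp B mW u').
  { apply (T_inj eps2 A (Hi2 A)). rewrite !prec_comp, <- !cA, HmW, Hv', !cA, F5, <- cA, Hu'.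
    symmetry. exact Huv. }
  destruct (Hpb _ _ _ v' mW mWm) as [P'' [r1 [r2 Hrr]]].
  assert (r1m : VMono B _ _ r1) by exact (vpb_mono r1 r2 v' mW Hrr mWm).
  destruct (vpb_elem r1 r2 v' mW e u' Hrr Esq) as [k [Hk1 Hk2]].
  destruct (Hmin P'' r1 k r1m Hk1) as [pi [Hpi1 Hpi2]].
  exists (prec B (acomp B r2 pi) C1 ∘ eps1). split.
  - split.
    + rewrite cA, <- prec_comp, acomp_assoc, Hpi2, Hk2. exact Hu'.
    + rewrite cA, <- F5, <- cA, <- HmW, cA, <- prec_comp, <- acomp_assoc, <- (proj1 Hrr),
        acomp_assoc, Hpi1, acomp_idr. exact Hv'.
  - intros w' [Hw1 _]. apply (Hepi C1). rewrite Hw1, cA, <- prec_comp, acomp_assoc, Hpi2, Hk2.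
    exact Hu'.
Qed.

End BL.
End Mon.

Theorem corollary7p10 (V : SMCC) (B : VCat V)
  (Hcot : is_cotensored B)
  (Hcok : has_vcokernel_pairs B)
  (Hpb : has_vpullbacks_of_vmonos B)
  (Hint : has_vintersections_of_vmonos B) :
  VFactSystem B (StrEpi B) (VMono B).
Proof.
  pose proof (factor V B Hcot Hcok Hpb Hint) as Fac.
  split; [|split].
  - intros C1 C2 m. split.
    + intros Hm A1 A2 e [_ He]. exact (He _ _ m Hm).
    + intros Ho. destruct (Fac _ _ m) as [D [e' [m' [He' [Hm' Em]]]]].
      destruct (vorth_elem V B e' m (Bid B C1) m' (Ho _ _ e' He')) as [w [Hw1 Hw2]].
      { rewrite acomp_idr. exact Em. }
      rewrite Em. apply vmono_comp; auto. exact (vmono_split V B w e' Hw1).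
  - intros A1 A2 e. split.
    + intros [_ He]. exact He.
    + intros Ho. split; [|exact Ho].
      destruct (Fac _ _ e) as [D [e' [m' [[He' _] [Hm' Em]]]]].
      destruct (vorth_elem V B e m' e' (Bid B A2) (Ho _ _ m' Hm')) as [w [Hw1 Hw2]].
      { rewrite acomp_idl. symmetry. exact Em. }
      intro X. rewrite Em, prec_comp. apply mono_comp.
      * apply He'.
      * exact (vepi_split V B m' w Hw2 X).
  - exact Fac.
Qed.
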